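(* Let $\gamma>1$, $\alpha,\beta\in\mathbb{R}$, $u_->0$, $c_->0$, and let $s_c=c_-^{\frac{2}{\gamma+1}}u_-^{\frac{\gamma-1}{\gamma+1}}$. Define $$L_m=\frac1\beta\Big(\frac{1}{1-\alpha}(s_c^{1-\alpha}-u_-^{1-\alpha})+\frac{1}{\gamma+\alpha}c_-^2(u_-^{\gamma-1}s_c^{-\gamma-\alpha}-u_-^{-1-\alpha})\Big)\quad\text{if }\alpha\neq1,\ \alpha\ne-\gamma,$$ $$L_m=\frac1\beta\Big(\frac{1}{\gamma+1}c_-^2(u_-^{\gamma-1}s_c^{-\gamma-1}-u_-^{-2})+\ln\frac{s_c}{u_-}\Big)\quad\text{if }\alpha=1,$$ $$L_m=\frac1\beta\Big(\frac{1}{\gamma+1}(s_c^{\gamma+1}-u_-^{\gamma+1})-c_-^2u_-^{\gamma-1}\ln\frac{s_c}{u_-}\Big)\quad\text{if }\alpha=-\gamma,$$ a positive constant depending only on $\alpha,\beta,\gamma,c_-,u_-$. If the duct length satisfies $L<L_m$, then the Cauchy problem $$\tilde c'\tilde u+\tfrac{\gamma-1}{2}\tilde c\tilde u'=0,\qquad \tilde u\tilde u'+\tfrac{2}{\gamma-1}\tilde c\tilde c'=\beta\tilde u^{1+\alpha},\qquad (\tilde c,\tilde u)(0)=(c_-,u_-)$$ admits a unique smooth positive solution $(\tilde c(x),\tilde u(x))^\top$ on $[0,L]$, which for $x\in(0,L]$ satisfies: 1) $0<\tilde u(x)<u_-<c_-<\tilde c(x)$ if $\beta>0$ and $c_->u_-$;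 2) $0<\tilde c(x)<c_-<u_-<\tilde u(x)$ if $\beta>0$ and $c_-<u_-$; 3) $0<u_-<\tilde u(x)<\tilde c(x)<c_-$ if $\beta<0$ and $c_->u_-$; 4) $0<c_-<\tilde c(x)<\tilde u(x)<u_-$ if $\beta<0$ and $c_-<u_-$.
   Context: Here $\tilde c$ represents the sound speed and $\tilde u$ the fluid velocity of a steady flow of the isentropic Euler equations with friction term $\beta\rho|u|^\alpha u$ and pressure $p=\rho^\gamma$, with $\tilde c=\sqrt\gamma\tilde\rho^{\frac{\gamma-1}{2}}$. *)

(* Defs.v *)
From Stdlib Require Import Reals.
From Coquelicot Require Import Coquelicot.
Open Scope R_scope.

Definition s_c (gamma cm um : R) : R :=
  Rpower cm (2 / (gamma + 1)) * Rpower um ((gamma - 1) / (gamma + 1)).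

Definition L_m (alpha beta gamma cm um : R) : R :=
  let s := s_c gamma cm um in
  if Req_EM_T alpha 1 then
    / beta * (/ (gamma + 1) * cm ^ 2 *
               (Rpower um (gamma - 1) * Rpower s (- gamma - 1) - Rpower um (-2))
              + ln (s / um))
  else if Req_EM_T alpha (- gamma) then
    / beta * (/ (gamma + 1) * (Rpower s (gamma + 1) - Rpower um (gamma + 1))
              - cm ^ 2 * Rpower um (gamma - 1) * ln (s / um))
  else
    / beta * (/ (1 - alpha) * (Rpower s (1 - alpha) - Rpower um (1 - alpha))
              + / (gamma + alpha) * cm ^ 2 *
                (Rpower um (gamma - 1) * Rpower s (- gamma - alpha)
                 - Rpower um (- 1 - alpha))).

Definition ode_at (alpha beta gamma : R) (c u : R -> R) (x : R) : Prop :=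
  Derive c x * u x + (gamma - 1) / 2 * c x * Derive u x = 0 /\
  u x * Derive u x + 2 / (gamma - 1) * c x * Derive c x
    = beta * Rpower (u x) (1 + alpha).

(* Smooth (C^infinity) positive solution on [0,L]: derivatives of every order
   exist at every point of the closed interval [0,L] (two-sided, i.e. f is
   smooth on a neighbourhood of [0,L]); the ODE holds on [0,L]. *)
Definition smooth_sol (alpha beta gamma cm um L : R) (c u : R -> R) : Prop :=
  c 0 = cm /\ u 0 = um /\
  (forall x, 0 <= x <= L ->
     0 < c x /\ 0 < u x /\
     (forall n : nat, ex_derive_n c n x /\ ex_derive_n u n x) /\
     ode_at alpha beta gamma c u x).

Definition weak_sol (alpha beta gamma cm um L : R) (c u : R -> R) : Prop :=
  c 0 = cm /\ u 0 = um /\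
  (forall x, 0 <= x <= L -> 0 < c x /\ 0 < u x) /\
  filterlim c (at_right 0) (locally cm) /\
  filterlim u (at_right 0) (locally um) /\
  filterlim c (at_left L) (locally (c L)) /\
  filterlim u (at_left L) (locally (u L)) /\
  (forall x, 0 < x < L ->
     ex_derive c x /\ ex_derive u x /\ ode_at alpha beta gamma c u x).

(* Main.v *)
Require Import Defs.
From Stdlib Require Import Reals.
From Coquelicot Require Import Coquelicot.
From Stdlib Require Import Lra Classical ClassicalEpsilon.
Open Scope R_scope.

Lemma is_derive_eq (f : R -> R) (x l l' : R) : is_derive f x l -> l = l' -> is_derive f x l'.
Proof. intros H ->; exact H. Qed.

Lemma Rpower_pos x y : 0 < Rpower x y.
Proof. unfold Rpower; apply exp_pos. Qed.

Lemma is_derive_Rpow x a : 0 < x -> is_derive (fun y => Rpower y a) x (a * Rpower x (a - 1)).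
Proof. intros H; apply is_derive_Reals, derivable_pt_lim_power, H. Qed.

Lemma is_derive_cR (a x : R) : is_derive (fun _ => a) x 0.
Proof. exact (@is_derive_const R_AbsRing R_NormedModule a x). Qed.
Lemma is_derive_idR (x : R) : is_derive (fun t => t) x 1.
Proof. exact (@is_derive_id R_AbsRing x). Qed.

Inductive nice (p q : R) : (R -> R) -> Prop :=
| n_const : forall a, nice p q (fun _ => a)
| n_id : nice p q (fun y => y)
| n_pow : forall a, nice p q (fun y => Rpower y a)
| n_plus : forall f g, nice p q f -> nice p q g -> nice p q (fun y => f y + g y)
| n_mult : forall f g, nice p q f -> nice p q g -> nice p q (fun y => f y * g y)
| n_inv : forall f, nice p q f -> (forall y, p < y < q -> f y <> 0) ->
    nice p q (fun y => / f y).

Lemma nice_der p q f : 0 <= p -> nice p q f ->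
  exists g, nice p q g /\ forall y, p < y < q -> is_derive f y (g y).
Proof.
  intros Hp H; induction H.
  - exists (fun _ => 0); split; [constructor|]. intros; apply is_derive_cR.
  - exists (fun _ => 1); split; [constructor|]. intros; apply is_derive_idR.
  - exists (fun y => a * Rpower y (a - 1)); split.
    + apply n_mult; constructor.
    + intros y Hy; apply is_derive_Rpow; lra.
  - destruct IHnice1 as [f' [Hf' Df]]; destruct IHnice2 as [g' [Hg' Dg]].
    exists (fun y => f' y + g' y); split; [constructor; auto|].
    intros y Hy. apply (is_derive_plus f g); auto.
  - destruct IHnice1 as [f' [Hf' Df]]; destruct IHnice2 as [g' [Hg' Dg]].
    exists (fun y => f' y * g y + f y * g' y); split; [repeat constructor; auto|].
    intros y Hy. apply (is_derive_mult f g); auto. intros; apply Rmult_comm.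
  - destruct IHnice as [f' [Hf' Df]].
    exists (fun y => -1 * f' y * (/ f y * / f y)); split.
    + apply (n_mult p q (fun y => -1 * f' y) (fun y => / f y * / f y)).
      * apply (n_mult p q (fun _ => -1) f'); [constructor|auto].
      * apply (n_mult p q (fun y => / f y) (fun y => / f y)); apply n_inv; auto.
    + intros y Hy. eapply is_derive_eq. apply is_derive_inv; auto.
      simpl. field; auto.
Qed.

Lemma comp_smooth p q F a b (u : R -> R) : 0 <= p -> nice p q F ->
  (forall x, a < x < b -> p < u x < q /\ is_derive u x (F (u x))) ->
  forall n f, nice p q f -> exists h, nice p q h /\
    forall x, a < x < b -> Derive_n (fun t => f (u t)) n x = h (u x).
Proof.
  intros Hp HF Hu n; induction n; intros f Hf.
  - exists f; split; auto.
  - destruct (IHn f Hf) as [h [Hh Eh]].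
    destruct (nice_der p q h Hp Hh) as [h' [Hh' Dh]].
    exists (fun y => h' y * F y); split; [constructor; auto|].
    intros x Hx. simpl.
    rewrite (Derive_ext_loc _ (fun t => h (u t))).
    + apply is_derive_unique.
      eapply is_derive_eq. apply (is_derive_comp h u).
      apply Dh, Hu, Hx. apply Hu, Hx.
      simpl. unfold scal; simpl; unfold mult; simpl. apply Rmult_comm.
    + apply (locally_interval _ x a b); simpl; try lra.
      intros y H1 H2; apply Eh; simpl in *; lra.
Qed.

Lemma comp_smooth_ex p q F a b (u : R -> R) : 0 <= p -> nice p q F ->
  (forall x, a < x < b -> p < u x < q /\ is_derive u x (F (u x))) ->
  forall n f, nice p q f -> forall x, a < x < b -> ex_derive_n (fun t => f (u t)) n x.
Proof.
  intros Hp HF Hu n f Hf x Hx. destruct n; simpl; auto.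
  destruct (comp_smooth p q F a b u Hp HF Hu n f Hf) as [h [Hh Eh]].
  destruct (nice_der p q h Hp Hh) as [h' [Hh' Dh]].
  apply (ex_derive_ext_loc (fun t => h (u t))).
  - apply (locally_interval _ x a b); simpl; try lra.
    intros y H1 H2; symmetry; apply Eh; simpl in *; lra.
  - eexists. apply (is_derive_comp h u). apply Dh, Hu, Hx. apply Hu, Hx.
Qed.


Lemma dplus (f g : R -> R) x df dg : is_derive f x df -> is_derive g x dg ->
  is_derive (fun t => f t + g t) x (df + dg).
Proof. intros; apply (is_derive_plus f g); auto. Qed.
Lemma dminus (f g : R -> R) x df dg : is_derive f x df -> is_derive g x dg ->
  is_derive (fun t => f t - g t) x (df - dg).
Proof. intros; apply (is_derive_minus f g); auto. Qed.
Lemma dscal (f : R -> R) k x df : is_derive f x df -> is_derive (fun t => k * f t) x (k * df).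
Proof. intros; apply is_derive_scal; auto. Qed.
Lemma dmult (f g : R -> R) x df dg : is_derive f x df -> is_derive g x dg ->
  is_derive (fun t => f t * g t) x (df * g x + f x * dg).
Proof. intros; apply (is_derive_mult f g); auto. intros; apply Rmult_comm. Qed.
Lemma dcomp (f g : R -> R) x df dg : is_derive f (g x) df -> is_derive g x dg ->
  is_derive (fun t => f (g t)) x (dg * df).
Proof. intros; apply (is_derive_comp f g); auto. Qed.
Lemma dlndiv x um : 0 < x -> 0 < um -> is_derive (fun t => ln (t / um)) x (/ x).
Proof.
  intros Hx Hu. eapply is_derive_eq.
  - apply (dcomp ln (fun t => t / um)). apply is_derive_ln.
    apply Rdiv_lt_0_compat; auto.
    apply (dmult (fun t => t) (fun _ => / um)). apply is_derive_idR. apply is_derive_cR.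
  - unfold Rdiv; simpl; field; lra.
Qed.

Definition Kc gamma cm um := cm ^ 2 * Rpower um (gamma - 1).

Definition Xf (alpha beta gamma cm um s : R) : R :=
  if Req_EM_T alpha 1 then
    / beta * (/ (gamma + 1) * cm ^ 2 *
               (Rpower um (gamma - 1) * Rpower s (- gamma - 1) - Rpower um (-2))
              + ln (s / um))
  else if Req_EM_T alpha (- gamma) then
    / beta * (/ (gamma + 1) * (Rpower s (gamma + 1) - Rpower um (gamma + 1))
              - cm ^ 2 * Rpower um (gamma - 1) * ln (s / um))
  else
    / beta * (/ (1 - alpha) * (Rpower s (1 - alpha) - Rpower um (1 - alpha))
              + / (gamma + alpha) * cm ^ 2 *
                (Rpower um (gamma - 1) * Rpower s (- gamma - alpha)
                 - Rpower um (- 1 - alpha))).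

Lemma Lm_X alpha beta gamma cm um :
  L_m alpha beta gamma cm um = Xf alpha beta gamma cm um (s_c gamma cm um).
Proof. reflexivity. Qed.

Definition Dd alpha gamma cm um u :=
  Rpower u (- alpha) - Kc gamma cm um * Rpower u (- gamma - 1 - alpha).

Lemma X_um alpha beta gamma cm um : 0 < um -> Xf alpha beta gamma cm um um = 0.
Proof.
  intros H. unfold Xf.
  assert (E : um / um = 1) by (field; lra).
  rewrite E, ln_1.
  destruct (Req_EM_T alpha 1).
  - subst. replace (- gamma - 1) with (- (gamma+1)) by ring.
    replace (-2) with (-(gamma+1) + (gamma - 1)) by ring.
    rewrite (Rpower_plus _ (gamma - 1)). ring.
  - destruct (Req_EM_T alpha (- gamma)).
    + ring.
    + replace (- 1 - alpha) with ((gamma - 1) + (-gamma - alpha)) by ring.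
      rewrite Rpower_plus. ring.
Qed.

Lemma X_deriv alpha beta gamma cm um u : 1 < gamma -> 0 < um -> 0 < u ->
  is_derive (Xf alpha beta gamma cm um) u (/ beta * Dd alpha gamma cm um u).
Proof.
  intros Hg Hum Hu. unfold Xf, Dd, Kc.
  destruct (Req_EM_T alpha 1) as [E1|N1].
  - subst alpha. eapply is_derive_eq.
    + apply dscal. apply dplus.
      * apply dscal. apply dminus. apply dscal. apply is_derive_Rpow; auto. apply is_derive_cR.
      * apply dlndiv; auto.
    + rewrite Rpower_Ropp, Rpower_1 by auto.
      replace (- gamma - 1 - 1) with (- gamma - 1 - 1) by ring.
      apply f_equal; field; lra.
  - destruct (Req_EM_T alpha (- gamma)) as [E2|N2].
    + subst alpha. eapply is_derive_eq.
      * apply dscal. apply dminus.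
        -- apply dscal. apply dminus. apply is_derive_Rpow; auto. apply is_derive_cR.
        -- apply dscal. apply dlndiv; auto.
      * replace (- - gamma) with (gamma + 1 - 1) by ring.
        replace (- gamma - 1 - - gamma) with (-(1)) by ring.
        rewrite Rpower_Ropp, Rpower_1 by auto.
        apply f_equal; field; lra.
    + assert (1 - alpha <> 0) by lra. assert (gamma + alpha <> 0) by lra.
      eapply is_derive_eq.
      * apply dscal. apply dplus.
        -- apply dscal. apply dminus. apply is_derive_Rpow; auto. apply is_derive_cR.
        -- apply dscal. apply dminus. apply dscal. apply is_derive_Rpow; auto. apply is_derive_cR.
      * replace (1 - alpha - 1) with (- alpha) by ring.
        replace (- gamma - alpha - 1) with (- gamma - 1 - alpha) by ring.
        apply f_equal; field; auto.
Qed.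

Lemma dopp (f : R -> R) x df : is_derive f x df -> is_derive (fun t => - f t) x (- df).
Proof. intros; apply (is_derive_opp f); auto. Qed.


Lemma s_pos gamma cm um : 0 < s_c gamma cm um.
Proof. unfold s_c. apply Rmult_lt_0_compat; apply Rpower_pos. Qed.

Lemma Rpower_2 x : 0 < x -> Rpower x 2 = x ^ 2.
Proof. intros H. replace 2 with (INR 2) by (simpl; ring). apply Rpower_pow, H. Qed.

Lemma s_pow gamma cm um : 1 < gamma -> 0 < cm -> 0 < um ->
  Rpower (s_c gamma cm um) (gamma + 1) = Kc gamma cm um.
Proof.
  intros Hg Hc Hu. unfold s_c, Kc.
  rewrite <- Rpower_mult_distr by apply Rpower_pos.
  rewrite !Rpower_mult.
  replace (2 / (gamma + 1) * (gamma + 1)) with 2 by (field; lra).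
  replace ((gamma - 1) / (gamma + 1) * (gamma + 1)) with (gamma - 1) by (field; lra).
  rewrite Rpower_2 by auto. reflexivity.
Qed.

Lemma Rpower_lt_iff a b e : 0 < a -> 0 < b -> 0 < e -> (a < b <-> Rpower a e < Rpower b e).
Proof.
  intros Ha Hb He; split; intros H.
  - apply Rlt_Rpower_l; auto.
  - destruct (Rlt_le_dec a b) as [?|Hle]; auto.
    exfalso. destruct (Rle_lt_or_eq_dec _ _ Hle) as [Hl|Heq].
    + pose proof (Rlt_Rpower_l b a e He (conj Hb Hl)); lra.
    + subst; lra.
Qed.

Lemma D_fact alpha gamma cm um u : 0 < u ->
  Dd alpha gamma cm um u = Rpower u (- gamma - 1 - alpha) * (Rpower u (gamma + 1) - Kc gamma cm um).
Proof.
  intros H. unfold Dd. rewrite Rmult_minus_distr_l, <- Rpower_plus.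
  replace (- gamma - 1 - alpha + (gamma + 1)) with (- alpha) by ring. ring.
Qed.

Lemma D_neg alpha gamma cm um u : 1 < gamma -> 0 < cm -> 0 < um -> 0 < u < s_c gamma cm um ->
  Dd alpha gamma cm um u < 0.
Proof.
  intros Hg Hc Hu [H1 H2]. rewrite D_fact by auto.
  rewrite <- (s_pow gamma cm um) by auto.
  apply (Rpower_lt_iff u _ (gamma+1)) in H2; auto; [|apply s_pos|lra].
  pose proof (Rpower_pos u (- gamma - 1 - alpha)). nra.
Qed.

Lemma D_pos alpha gamma cm um u : 1 < gamma -> 0 < cm -> 0 < um -> s_c gamma cm um < u ->
  0 < Dd alpha gamma cm um u.
Proof.
  intros Hg Hc Hu H2. pose proof (s_pos gamma cm um). rewrite D_fact by lra.
  rewrite <- (s_pow gamma cm um) by auto.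
  apply (Rpower_lt_iff _ u (gamma+1)) in H2; auto; [|lra|lra].
  pose proof (Rpower_pos u (- gamma - 1 - alpha)). nra.
Qed.

Lemma um_s_cmp gamma cm um : 1 < gamma -> 0 < cm -> 0 < um ->
  (um < cm <-> um < s_c gamma cm um) /\ (cm < um <-> s_c gamma cm um < um).
Proof.
  intros Hg Hc Hu. pose proof (s_pos gamma cm um).
  assert (E : Rpower um (gamma + 1) = um ^ 2 * Rpower um (gamma - 1)).
  { replace (gamma + 1) with (2 + (gamma - 1)) by ring. rewrite Rpower_plus, Rpower_2; auto. }
  assert (P := Rpower_pos um (gamma - 1)).
  rewrite (Rpower_lt_iff um (s_c gamma cm um) (gamma + 1)) by lra.
  rewrite (Rpower_lt_iff (s_c gamma cm um) um (gamma + 1)) by lra.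
  rewrite s_pow by auto. unfold Kc. rewrite E.
  split; split; intros.
  - apply Rmult_lt_compat_r; auto. nra.
  - assert (um ^ 2 < cm ^ 2) by (eapply Rmult_lt_reg_r; eauto). nra.
  - apply Rmult_lt_compat_r; auto. nra.
  - assert (cm ^ 2 < um ^ 2) by (eapply Rmult_lt_reg_r; eauto). nra.
Qed.


Lemma incr_of_deriv (f f' : R -> R) a b : a < b ->
  (forall c, a <= c <= b -> is_derive f c (f' c)) -> (forall c, a < c < b -> 0 < f' c) ->
  f a < f b.
Proof.
  intros Hab Hd Hp.
  destruct (MVT_cor2 f f' a b Hab) as [c [E Hc]].
  - intros c Hc; apply is_derive_Reals, Hd, Hc.
  - assert (0 < f' c) by (apply Hp; auto). nra.
Qed.

Lemma decr_of_deriv (f f' : R -> R) a b : a < b ->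
  (forall c, a <= c <= b -> is_derive f c (f' c)) -> (forall c, a < c < b -> f' c < 0) ->
  f b < f a.
Proof.
  intros Hab Hd Hp.
  destruct (MVT_cor2 f f' a b Hab) as [c [E Hc]].
  - intros c Hc; apply is_derive_Reals, Hd, Hc.
  - assert (f' c < 0) by (apply Hp; auto). nra.
Qed.

Lemma inv_incr (f f' : R -> R) lb ub : lb < ub ->
  (forall v, lb <= v <= ub -> is_derive f v (f' v)) -> (forall v, lb <= v <= ub -> 0 < f' v) ->
  exists g : R -> R, forall y, f lb < y < f ub ->
    lb < g y < ub /\ f (g y) = y /\ is_derive g y (/ f' (g y)).
Proof.
  intros Hlu Hd Hp.
  assert (Hinc : forall x y, lb <= x -> x < y -> y <= ub -> f x < f y).
  { intros x y H1 H2 H3. apply (incr_of_deriv f f'); auto.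
    intros; apply Hd; lra. intros; apply Hp; lra. }
  assert (Hcont : forall a, lb <= a <= ub -> continuity_pt f a).
  { intros a Ha. apply derivable_continuous_pt. exists (f' a). apply is_derive_Reals, Hd, Ha. }
  assert (Hex : forall y, f lb <= y <= f ub -> exists z, lb <= z <= ub /\ f z = y).
  { intros y Hy.
    destruct (Req_dec y (f lb)) as [E|N1]. { exists lb; split; [lra|auto]. }
    destruct (Req_dec y (f ub)) as [E|N2]. { exists ub; split; [lra|auto]. }
    destruct (Ranalysis5.IVT_interv (fun z => f z - y) lb ub) as [z [Hz Ez]]; auto.
    - intros a Ha. apply continuity_pt_minus; auto. apply continuity_pt_const. intros ? ?; auto.
    - lra. - lra.
    - exists z; split; auto; lra. }
  set (g := fun y => epsilon (inhabits 0) (fun z => lb <= z <= ub /\ f z = y)).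
  assert (Hg : forall y, f lb <= y <= f ub -> lb <= g y <= ub /\ f (g y) = y).
  { intros y Hy. apply (epsilon_spec (inhabits 0) (fun z => lb <= z <= ub /\ f z = y)), Hex, Hy. }
  assert (Hinj : forall x y, lb <= x <= ub -> lb <= y <= ub -> f x = f y -> x = y).
  { intros x y Hx Hy E. destruct (Rtotal_order x y) as [H|[H|H]]; auto.
    - pose proof (Hinc x y); lra. - pose proof (Hinc y x); lra. }
  assert (flb_lt : f lb < f ub) by (apply Hinc; lra).
  assert (glb : g (f lb) = lb).
  { destruct (Hg (f lb)) as [H1 H2]; [lra|]. apply Hinj; auto; lra. }
  assert (gub : g (f ub) = ub).
  { destruct (Hg (f ub)) as [H1 H2]; [lra|]. apply Hinj; auto; lra. }
  exists g. intros y Hy.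
  destruct (Hg y) as [Hgy Egy]; [lra|].
  assert (Hgy' : lb < g y < ub).
  { split; destruct (Rle_lt_or_eq_dec _ _ (proj1 Hgy)) as [?|E];
      try destruct (Rle_lt_or_eq_dec _ _ (proj2 Hgy)) as [?|E']; auto;
      try (rewrite <- E in Egy; lra); try (rewrite E' in Egy; lra). }
  split; [exact Hgy'|split; [exact Egy|]].
  assert (Prf : forall a, g (f lb) <= a <= g (f ub) -> derivable_pt f a).
  { intros a Ha. rewrite glb, gub in Ha. exists (f' a). apply is_derive_Reals, Hd, Ha. }
  assert (Prg : continuity_pt g y).
  { apply (Ranalysis5.continuity_pt_recip_interv f g lb ub); auto.
    - intros x H1 H2. unfold comp, id. apply Hg; lra.
    - intros x H1 H2. apply Hg; lra. }
  assert (Prg_incr : g (f lb) <= g y <= g (f ub)) by (rewrite glb, gub; lra).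
  pose proof (Ranalysis5.derivable_pt_lim_recip_interv f g (f lb) (f ub) y Prf Prg flb_lt Hy Prg_incr) as HH.
  assert (Ed : derive_pt f (g y) (Prf (g y) Prg_incr) = f' (g y)).
  { apply derive_pt_eq_0, is_derive_Reals, Hd; lra. }
  rewrite Ed in HH.
  apply is_derive_Reals. replace (/ f' (g y)) with (1 / f' (g y)) by (unfold Rdiv; ring).
  apply HH.
  - intros x Hx. unfold comp, id. apply Hg; lra.
  - pose proof (Hp (g y)); lra.
Qed.

Lemma inv_decr (f f' : R -> R) lb ub : lb < ub ->
  (forall v, lb <= v <= ub -> is_derive f v (f' v)) -> (forall v, lb <= v <= ub -> f' v < 0) ->
  exists g : R -> R, forall y, f ub < y < f lb ->
    lb < g y < ub /\ f (g y) = y /\ is_derive g y (/ f' (g y)).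
Proof.
  intros Hlu Hd Hp.
  destruct (inv_incr (fun w => f (- w)) (fun w => - f' (- w)) (- ub) (- lb)) as [gm Hgm].
  - lra.
  - intros v Hv. eapply is_derive_eq.
    + apply (dcomp f (fun w => - w)). apply Hd; lra.
      apply (dopp (fun t => t)). apply is_derive_idR.
    + ring.
  - intros v Hv. pose proof (Hp (- v)); lra.
  - exists (fun y => - gm y). intros y Hy.
    rewrite !Ropp_involutive in Hgm.
    destruct (Hgm y Hy) as [H1 [H2 H3]]. split; [lra|split; auto].
    eapply is_derive_eq.
    + apply (dopp gm), H3.
    + pose proof (Hp (- gm y)). field. lra.
Qed.


Set Default Proof Using "All".
Section XM.
Variables alpha beta gamma cm um : R.
Hypothesis Hg : 1 < gamma.
Hypothesis Hc : 0 < cm.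
Hypothesis Hu : 0 < um.
Local Notation s := (s_c gamma cm um).
Local Notation X := (Xf alpha beta gamma cm um).
Local Notation X' := (fun v => / beta * Dd alpha gamma cm um v).

Lemma Xd v : 0 < v -> is_derive X v (X' v).
Proof. intros; apply X_deriv; auto. Qed.

Lemma X_sub_incr : beta < 0 -> forall v1 v2, 0 < v1 -> v1 < v2 -> v2 <= s -> X v1 < X v2.
Proof.
  intros Hb v1 v2 H1 H2 H3. apply (incr_of_deriv X X'); auto.
  - intros c Hc'; apply Xd; lra.
  - intros c Hc'. assert (0 < c < s) by lra. pose proof (D_neg alpha gamma cm um c Hg Hc Hu H).
    pose proof (Rinv_lt_0_compat _ Hb). nra.
Qed.

Lemma X_sup_decr : beta < 0 -> forall v1 v2, s <= v1 -> v1 < v2 -> X v2 < X v1.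
Proof.
  intros Hb v1 v2 H1 H2. pose proof (s_pos gamma cm um). apply (decr_of_deriv X X'); auto.
  - intros c Hc'; apply Xd; lra.
  - intros c Hc'. assert (s < c) by lra. pose proof (D_pos alpha gamma cm um c Hg Hc Hu H0).
    pose proof (Rinv_lt_0_compat _ Hb). nra.
Qed.

Lemma X_sub_decr_pos : 0 < beta -> forall v1 v2, 0 < v1 -> v1 < v2 -> v2 <= s -> X v2 < X v1.
Proof.
  intros Hb v1 v2 H1 H2 H3. apply (decr_of_deriv X X'); auto.
  - intros c Hc'; apply Xd; lra.
  - intros c Hc'. assert (0 < c < s) by lra. pose proof (D_neg alpha gamma cm um c Hg Hc Hu H).
    pose proof (Rinv_0_lt_compat _ Hb). nra.
Qed.

Lemma X_sup_incr_pos : 0 < beta -> forall v1 v2, s <= v1 -> v1 < v2 -> X v1 < X v2.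
Proof.
  intros Hb v1 v2 H1 H2. pose proof (s_pos gamma cm um). apply (incr_of_deriv X X'); auto.
  - intros c Hc'; apply Xd; lra.
  - intros c Hc'. assert (s < c) by lra. pose proof (D_pos alpha gamma cm um c Hg Hc Hu H0).
    pose proof (Rinv_0_lt_compat _ Hb). nra.
Qed.

Lemma Lm_nonpos : ~ (beta < 0 /\ s <> um) -> L_m alpha beta gamma cm um <= 0.
Proof.
  intros H. rewrite Lm_X.
  pose proof (s_pos gamma cm um). 
  destruct (Req_dec s um) as [E|N].
  - rewrite E. rewrite X_um; auto. lra.
  - destruct (Rtotal_order beta 0) as [Hb|[Hb|Hb]].
    + exfalso; tauto.
    + unfold Xf. subst beta. rewrite Rinv_0.
      destruct (Req_EM_T alpha 1); [|destruct (Req_EM_T alpha (- gamma))]; lra.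
    + assert (X um = 0) by (apply X_um; auto).
      destruct (Rtotal_order um s) as [Hl|[Hl|Hl]].
      * pose proof (X_sub_decr_pos Hb um s Hu Hl (Rle_refl _)). lra.
      * lra.
      * pose proof (X_sup_incr_pos Hb s um (Rle_refl _) Hl). lra.
Qed.

End XM.


Set Default Proof Using "All".
Section EX.
Variables alpha beta gamma cm um L : R.
Hypothesis Hg : 1 < gamma.
Hypothesis Hc : 0 < cm.
Hypothesis Hu : 0 < um.
Hypothesis Hb : beta < 0.
Local Notation s := (s_c gamma cm um).
Local Notation X := (Xf alpha beta gamma cm um).
Local Notation X' := (fun v => / beta * Dd alpha gamma cm um v).
Hypothesis Hs : s <> um.
Hypothesis HL : 0 < L.
Hypothesis HLm : L < L_m alpha beta gamma cm um.

Lemma X_cont v : 0 < v -> continuity_pt X v.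
Proof. intros H. apply derivable_continuous_pt. exists (X' v). apply is_derive_Reals, Xd; auto. Qed.

Lemma exist_u : exists (u : R -> R) lo hi p q, lo < 0 /\ L < hi /\ 0 < p /\ p < q /\
  (q <= s \/ s <= p) /\ p < um < q /\
  (forall x, lo < x < hi -> p < u x < q /\ X (u x) = x /\ is_derive u x (/ X' (u x))).
Proof.
  pose proof (s_pos gamma cm um) as Hsp.
  rewrite Lm_X in HLm.
  assert (HX0 : X um = 0) by (apply X_um; auto).
  set (m := (L + X s) / 2).
  destruct (Rtotal_order um s) as [Hl|[Hl|Hl]]; [|lra|].
  - destruct (Ranalysis5.IVT_interv (fun v => X v - m) um s) as [z [Hz Ez]]; auto.
    + intros a Ha. apply continuity_pt_minus. apply X_cont; lra. apply continuity_pt_const. intros ? ?; auto.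
    + unfold m; lra.
    + unfold m; lra.
    + assert (Hz1 : um < z < s).
      { split; destruct (Rle_lt_or_eq_dec _ _ (proj1 Hz)) as [?|E]; try destruct (Rle_lt_or_eq_dec _ _ (proj2 Hz)) as [?|E'];
        auto; try (subst z; unfold m in Ez; lra); try (rewrite E' in Ez; unfold m in Ez; lra);
        rewrite <- E in Ez; unfold m in Ez; lra. }
      destruct (inv_incr X X' (um / 2) z) as [g Hgi]; [lra| | |].
      * intros v Hv; apply Xd; auto; lra.
      * intros v Hv. assert (0 < v < s) by lra.
        pose proof (D_neg alpha gamma cm um v Hg Hc Hu H). pose proof (Rinv_lt_0_compat _ Hb). nra.
      * exists g, (X (um / 2)), m, (um / 2), z.
        pose proof (X_sub_incr alpha beta gamma cm um Hg Hc Hu Hb (um/2) um).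
        assert (Xz : X z = m) by lra. rewrite Xz in Hgi.
        split; [lra|]. split; [unfold m; lra|]. split; [lra|]. split; [lra|]. split; [lra|]. split; [lra|].
        intros x Hx. apply Hgi in Hx. tauto.
  - destruct (Ranalysis5.IVT_interv (fun v => m - X v) s um) as [z [Hz Ez]]; auto.
    + intros a Ha. apply continuity_pt_minus. apply continuity_pt_const. intros ? ?; auto. apply X_cont; lra.
    + unfold m; lra.
    + unfold m; lra.
    + assert (Hz1 : s < z < um).
      { split; destruct (Rle_lt_or_eq_dec _ _ (proj1 Hz)) as [?|E]; try destruct (Rle_lt_or_eq_dec _ _ (proj2 Hz)) as [?|E'];
        auto; try (subst z; unfold m in Ez; lra); try (rewrite E' in Ez; unfold m in Ez; lra);
        rewrite <- E in Ez; unfold m in Ez; lra. }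
      destruct (inv_decr X X' z (2 * um)) as [g Hgi]; [lra| | |].
      * intros v Hv; apply Xd; auto; lra.
      * intros v Hv. assert (s < v) by lra.
        pose proof (D_pos alpha gamma cm um v Hg Hc Hu H). pose proof (Rinv_lt_0_compat _ Hb). nra.
      * exists g, (X (2 * um)), m, z, (2 * um).
        pose proof (X_sup_decr alpha beta gamma cm um Hg Hc Hu Hb um (2 * um)).
        assert (Xz : X z = m) by lra. rewrite Xz in Hgi.
        split; [lra|]. split; [unfold m; lra|]. split; [lra|]. split; [lra|]. split; [lra|]. split; [lra|].
        intros x Hx. apply Hgi in Hx. tauto.
Qed.
End EX.


Definition ee gamma := (1 - gamma) / 2.
Definition Cc gamma cm um := cm * Rpower um ((gamma - 1) / 2).

Set Default Proof Using "All".
Section AL.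
Variables alpha beta gamma cm um : R.
Hypothesis Hg : 1 < gamma.
Hypothesis Hc : 0 < cm.
Hypothesis Hu : 0 < um.
Local Notation s := (s_c gamma cm um).
Local Notation K := (Kc gamma cm um).
Local Notation C := (Cc gamma cm um).
Local Notation e := (ee gamma).

Lemma Cc_pos : 0 < C.
Proof. unfold Cc. apply Rmult_lt_0_compat; auto. apply Rpower_pos. Qed.

Lemma Cc_sq : C * C = K.
Proof.
  unfold Cc, Kc. replace (cm * Rpower um ((gamma - 1) / 2) * (cm * Rpower um ((gamma - 1) / 2)))
    with (cm ^ 2 * (Rpower um ((gamma - 1) / 2) * Rpower um ((gamma - 1) / 2))) by ring.
  rewrite <- Rpower_plus. f_equal. f_equal. field.
Qed.

Lemma c_um : C * Rpower um e = cm.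
Proof.
  unfold Cc, ee. rewrite Rmult_assoc, <- Rpower_plus.
  replace ((gamma - 1) / 2 + (1 - gamma) / 2) with 0 by field. rewrite Rpower_O; auto; ring.
Qed.

Lemma c_sq y : 0 < y -> (C * Rpower y e) * (C * Rpower y e) = K * Rpower y (1 - gamma).
Proof.
  intros Hy. rewrite <- Cc_sq.
  replace (C * Rpower y e * (C * Rpower y e)) with (C * C * (Rpower y e * Rpower y e)) by ring.
  rewrite <- Rpower_plus. unfold ee. f_equal. f_equal. field.
Qed.

Lemma c_pos y : 0 < C * Rpower y e.
Proof. apply Rmult_lt_0_compat. apply Cc_pos. apply Rpower_pos. Qed.

Lemma sq_lt a b : 0 < a -> 0 < b -> (a < b <-> a * a < b * b).
Proof. intros; split; intros; nra. Qed.

Lemma cu_lt y : 0 < y -> (y < C * Rpower y e <-> y < s) /\ (C * Rpower y e < y <-> s < y).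
Proof.
  intros Hy. pose proof (s_pos gamma cm um). pose proof (c_pos y).
  rewrite (sq_lt y), (sq_lt _ y) by auto. rewrite c_sq by auto.
  rewrite (Rpower_lt_iff y s (gamma + 1)), (Rpower_lt_iff s y (gamma + 1)) by lra.
  rewrite s_pow by auto.
  assert (E1 : Rpower y (gamma + 1) = y * y * Rpower y (gamma - 1)).
  { replace (gamma + 1) with (2 + (gamma - 1)) by ring. rewrite Rpower_plus, Rpower_2 by auto. ring. }
  assert (E2 : Rpower y (1 - gamma) * Rpower y (gamma - 1) = 1).
  { rewrite <- Rpower_plus. replace (1 - gamma + (gamma - 1)) with 0 by ring. apply Rpower_O; auto. }
  pose proof (Rpower_pos y (gamma - 1)). pose proof (Rpower_pos y (1 - gamma)).
  rewrite E1.
  set (a := Rpower y (1 - gamma)) in *. set (b := Rpower y (gamma - 1)) in *.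
  split; split; intros HH.
  - assert (H3 : y * y * b < K * a * b) by (apply Rmult_lt_compat_r; auto).
    replace (K * a * b) with (K * (a * b)) in H3 by ring. rewrite E2 in H3; lra.
  - assert (H3 : y * y * b * a < K * a) by (apply Rmult_lt_compat_r; auto).
    replace (y * y * b * a) with (y * y * (a * b)) in H3 by ring. rewrite E2 in H3; lra.
  - assert (H3 : K * a * b < y * y * b) by (apply Rmult_lt_compat_r; auto).
    replace (K * a * b) with (K * (a * b)) in H3 by ring. rewrite E2 in H3; lra.
  - assert (H3 : K * a < y * y * b * a) by (apply Rmult_lt_compat_r; auto).
    replace (y * y * b * a) with (y * y * (a * b)) in H3 by ring. rewrite E2 in H3; lra.
Qed.

Lemma c_decr y1 y2 : 0 < y1 < y2 -> C * Rpower y2 e < C * Rpower y1 e.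
Proof.
  intros H. apply Rmult_lt_compat_l. apply Cc_pos.
  replace e with (- ((gamma - 1) / 2)) by (unfold ee; field).
  rewrite !Rpower_Ropp. apply Rinv_lt_contravar.
  apply Rmult_lt_0_compat; apply Rpower_pos.
  apply Rlt_Rpower_l; auto; lra.
Qed.

Lemma ode_alg y : 0 < y -> beta <> 0 -> Dd alpha gamma cm um y <> 0 ->
  let u' := / (/ beta * Dd alpha gamma cm um y) in
  let c' := u' * (C * (e * Rpower y (e - 1))) in
  c' * y + (gamma - 1) / 2 * (C * Rpower y e) * u' = 0 /\
  y * u' + 2 / (gamma - 1) * (C * Rpower y e) * c' = beta * Rpower y (1 + alpha).
Proof.
  intros Hy Hb HD u' c'.
  assert (E : Rpower y (e - 1) * y = Rpower y e).
  { rewrite <- (Rpower_1 y) at 2 by auto. rewrite <- Rpower_plus. f_equal; ring. }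
  split.
  - unfold c'. rewrite <- E. unfold ee. field.
  - unfold c', u'. rewrite D_fact in * by auto.
    assert (EC : Rpower y e * Rpower y (e - 1) = Rpower y (- gamma)).
    { rewrite <- Rpower_plus. f_equal. unfold ee; field. }
    assert (Ey : y = Rpower y (- gamma) * Rpower y (gamma + 1)).
    { rewrite <- Rpower_plus. replace (- gamma + (gamma + 1)) with 1 by ring. rewrite Rpower_1; auto. }
    assert (EM : Rpower y (- gamma) = Rpower y (1 + alpha) * Rpower y (- gamma - 1 - alpha)).
    { rewrite <- Rpower_plus. f_equal; ring. }
    pose proof Cc_sq as CS.
    set (A := Rpower y (- gamma - 1 - alpha)) in *.
    set (G := Rpower y (gamma + 1)) in *.
    set (M := Rpower y (- gamma)) in *.
    set (B := Rpower y (1 + alpha)) in *.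
    set (R1 := Rpower y e) in *.
    set (R2 := Rpower y (e - 1)) in *.
    assert (HA : A <> 0) by (intro Z; apply HD; rewrite Z; ring).
    assert (HP : G - K <> 0) by (intro Z; apply HD; rewrite Z; ring).
    replace (2 / (gamma - 1) * (C * R1) * (/ (/ beta * (A * (G - K))) * (C * (e * R2))))
     with (- (C * C) * (R1 * R2) * (/ (/ beta * (A * (G - K)))))
     by (unfold ee; field; repeat split; auto; lra).
    rewrite CS, EC.
    rewrite Ey at 1. rewrite EM. field. repeat split; auto.
Qed.
End AL.


Lemma at_right_near a b (P : R -> Prop) : a < b -> (forall y, a < y < b -> P y) -> at_right a P.
Proof.
  intros Hab H. unfold at_right, within.
  apply (locally_interval _ a (a - 1) b); simpl; try lra.
  intros y H1 H2 H3. apply H; simpl in *; lra.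
Qed.

Lemma at_left_near a b (P : R -> Prop) : a < b -> (forall y, a < y < b -> P y) -> at_left b P.
Proof.
  intros Hab H. unfold at_left, within.
  apply (locally_interval _ b a (b + 1)); simpl; try lra.
  intros y H1 H2 H3. apply H; simpl in *; lra.
Qed.

Lemma lim_unique_r a (f : R -> R) l1 l2 :
  filterlim f (at_right a) (locally l1) -> filterlim f (at_right a) (locally l2) -> l1 = l2.
Proof.
  intros H1 H2.
  exact (@filterlim_locally_unique R R_AbsRing R_NormedModule (at_right a)
          (Proper_StrongProper _ (at_right_proper_filter a)) f l1 l2 H1 H2).
Qed.

Lemma lim_unique_l a (f : R -> R) l1 l2 :
  filterlim f (at_left a) (locally l1) -> filterlim f (at_left a) (locally l2) -> l1 = l2.
Proof.
  intros H1 H2.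
  exact (@filterlim_locally_unique R R_AbsRing R_NormedModule (at_left a)
          (Proper_StrongProper _ (at_left_proper_filter a)) f l1 l2 H1 H2).
Qed.

Lemma lim_ext_r a (f g : R -> R) l : filterlim f (at_right a) (locally l) ->
  at_right a (fun x => f x = g x) -> filterlim g (at_right a) (locally l).
Proof. intros H E. exact (@filterlim_ext_loc R R (at_right a) (locally l) (@filter_filter _ _ (at_right_proper_filter a)) f g E H). Qed.

Lemma lim_ext_l a (f g : R -> R) l : filterlim f (at_left a) (locally l) ->
  at_left a (fun x => f x = g x) -> filterlim g (at_left a) (locally l).
Proof. intros H E. exact (@filterlim_ext_loc R R (at_left a) (locally l) (@filter_filter _ _ (at_left_proper_filter a)) f g E H). Qed.

Lemma lim_const_r a (k : R) : filterlim (fun _ => k) (at_right a) (locally k).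
Proof. exact (@filterlim_const R R_UniformSpace (at_right a) (@filter_filter _ _ (at_right_proper_filter a)) k). Qed.
Lemma lim_const_l a (k : R) : filterlim (fun _ => k) (at_left a) (locally k).
Proof. exact (@filterlim_const R R_UniformSpace (at_left a) (@filter_filter _ _ (at_left_proper_filter a)) k). Qed.

Lemma lim_id_r a : filterlim (fun x : R => x) (at_right a) (locally a).
Proof.
  intros P HP. unfold filtermap, at_right, within.
  apply (filter_imp P); auto.
Qed.
Lemma lim_id_l a : filterlim (fun x : R => x) (at_left a) (locally a).
Proof.
  intros P HP. unfold filtermap, at_left, within.
  apply (filter_imp P); auto.
Qed.

Unset Default Proof Using.
Section LIM.
Variable F : (R -> Prop) -> Prop.
Hypothesis FF : Filter F.

Lemma lim_add (f g : R -> R) a b : filterlim f F (locally a) -> filterlim g F (locally b) ->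
  filterlim (fun x => f x + g x) F (locally (a + b)).
Proof.
  intros H1 H2.
  exact (@filterlim_comp_2 R R R R F (locally a) (locally b) (locally (a + b)) FF f g Rplus H1 H2
     (@filterlim_plus R_AbsRing R_NormedModule a b)).
Qed.

Lemma lim_mul (f g : R -> R) a b : filterlim f F (locally a) -> filterlim g F (locally b) ->
  filterlim (fun x => f x * g x) F (locally (a * b)).
Proof.
  intros H1 H2.
  exact (@filterlim_comp_2 R R R R F (locally a) (locally b) (locally (a * b)) FF f g Rmult H1 H2
     (@filterlim_mult R_AbsRing a b)).
Qed.

Lemma lim_opp (f : R -> R) a : filterlim f F (locally a) ->
  filterlim (fun x => - f x) F (locally (- a)).
Proof.
  intros H1.
  exact (filterlim_comp R R R f Ropp F (locally a) (locally (- a)) H1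
     (@filterlim_opp R_AbsRing R_NormedModule a)).
Qed.

Lemma lim_cont (f h : R -> R) a : filterlim f F (locally a) -> continuity_pt h a ->
  filterlim (fun x => h (f x)) F (locally (h a)).
Proof.
  intros H1 H2. apply continuity_pt_filterlim in H2.
  exact (filterlim_comp R R R f h F (locally a) (locally (h a)) H1 H2).
Qed.
End LIM.

Lemma const_from_deriv (g : R -> R) a b l : a < b ->
  (forall x, a < x < b -> is_derive g x 0) -> filterlim g (at_right a) (locally l) ->
  forall x, a < x < b -> g x = l.
Proof.
  intros Hab Hd Hl x Hx.
  apply (lim_unique_r a g); auto.
  apply (lim_ext_r a (fun _ => g x)). apply lim_const_r.
  apply (at_right_near a x). lra.
  intros y Hy. destruct (MVT_cor2 g (fun _ => 0) y x) as [c [E Hc]]; [lra| |].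
  - intros c Hc. apply is_derive_Reals, Hd; lra.
  - lra.
Qed.

Definition FR a : Filter (at_right a) := @filter_filter _ _ (at_right_proper_filter a).
Definition FL a : Filter (at_left a) := @filter_filter _ _ (at_left_proper_filter a).


Lemma keep_side (g : R -> R) L : 0 < L ->
  (forall x, 0 < x < L -> continuity_pt g x) ->
  filterlim g (at_right 0) (locally (g 0)) -> filterlim g (at_left L) (locally (g L)) ->
  g 0 < 0 -> (forall x, 0 <= x <= L -> g x <> 0) -> forall x, 0 <= x <= L -> g x < 0.
Proof.
  intros HL Hc Hr Hl H0 Hnz x Hx.
  destruct (Rlt_le_dec (g x) 0) as [?|Hge]; auto. exfalso.
  assert (Hgx : 0 < g x) by (destruct Hge; auto; exfalso; apply (Hnz x); auto).
  assert (Hx0 : 0 < x) by (destruct (proj1 Hx); auto; subst; lra).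
  assert (A1 : at_right 0 (fun y => g y < 0)).
  { assert (LOC : locally (g 0) (fun v => v < 0)) by (apply (locally_interval _ (g 0) m_infty 0); simpl; auto).
    exact (Hr _ LOC). }
  assert (A2 : at_right 0 (fun y => 0 < y < x)) by (apply (at_right_near 0 x); auto).
  destruct (@filter_ex _ _ (at_right_proper_filter 0) _
    (@filter_and _ _ (@filter_filter _ _ (at_right_proper_filter 0)) _ _ A1 A2)) as [x0 [Gx0 Ix0]].
  assert (Hx1 : exists x1, x0 < x1 < L /\ 0 < g x1 /\ x1 <= x).
  { destruct (Rlt_le_dec x L) as [Hlt|Hle].
    - exists x; repeat split; lra.
    - assert (x = L) by lra. subst x.
      assert (B1 : at_left L (fun y => 0 < g y)).
      { assert (LOC : locally (g L) (fun v => 0 < v)) by (apply (locally_interval _ (g L) 0 p_infty); simpl; auto).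
        exact (Hl _ LOC). }
      assert (B2 : at_left L (fun y => x0 < y < L)) by (apply (at_left_near x0 L); auto; lra).
      destruct (@filter_ex _ _ (at_left_proper_filter L) _
        (@filter_and _ _ (@filter_filter _ _ (at_left_proper_filter L)) _ _ B1 B2)) as [x1 [Gx1 Ix1]].
      exists x1; repeat split; lra. }
  destruct Hx1 as [x1 [Ix1 [Gx1 Lx1]]].
  destruct (Ranalysis5.IVT_interv g x0 x1) as [z [Hz Ez]]; auto.
  - intros a Ha; apply Hc; lra.
  - lra.
  - apply (Hnz z); auto; lra.
Qed.


Lemma Rpow_cont v a : 0 < v -> continuity_pt (fun y => Rpower y a) v.
Proof. intros H. apply derivable_continuous_pt. exists (a * Rpower v (a - 1)). apply is_derive_Reals, is_derive_Rpow, H. Qed.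

Set Default Proof Using "All".
Section UN.
Variables alpha beta gamma cm um L : R.
Hypothesis Hg : 1 < gamma.
Hypothesis Hc : 0 < cm.
Hypothesis Hu : 0 < um.
Hypothesis Hb : beta < 0.
Local Notation s := (s_c gamma cm um).
Local Notation K := (Kc gamma cm um).
Local Notation X := (Xf alpha beta gamma cm um).
Local Notation X' := (fun v => / beta * Dd alpha gamma cm um v).
Hypothesis HL : 0 < L.
Hypothesis HLm : L < L_m alpha beta gamma cm um.

Lemma Xc v : 0 < v -> continuity_pt X v.
Proof. intros H. apply derivable_continuous_pt. exists (X' v). apply is_derive_Reals, Xd; auto. Qed.

Lemma alg2 v c Dc Du : 0 < v -> 0 < c ->
  Dc * v + (gamma - 1) / 2 * c * Du = 0 ->
  v * Du + 2 / (gamma - 1) * c * Dc = beta * Rpower v (1 + alpha) ->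
  c * c * Rpower v (gamma - 1) = K -> Du * (/ beta * Dd alpha gamma cm um v) = 1.
Proof.
  intros Hv Hcp E1 E2 E3.
  assert (HDc : Dc = - ((gamma - 1) / 2 * c * Du) / v).
  { apply (Rmult_eq_reg_r v); [|lra]. unfold Rdiv. rewrite Rmult_assoc, Rinv_l by lra. lra. }
  rewrite HDc in E2.
  replace (v * Du + 2 / (gamma - 1) * c * (- ((gamma - 1) / 2 * c * Du) / v))
    with (v * Du - c * c * Du / v) in E2 by (field; lra).
  rewrite D_fact by auto.
  assert (Ey : v = Rpower v (- gamma) * Rpower v (gamma + 1)).
  { rewrite <- Rpower_plus. replace (- gamma + (gamma + 1)) with 1 by ring. rewrite Rpower_1; auto. }
  assert (EM : Rpower v (- gamma) = Rpower v (1 + alpha) * Rpower v (- gamma - 1 - alpha)).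
  { rewrite <- Rpower_plus. f_equal; ring. }
  assert (EP : Rpower v (gamma - 1) * Rpower v (- gamma) * v = 1).
  { rewrite <- (Rpower_1 v) at 3 by auto. rewrite <- !Rpower_plus.
    replace (gamma - 1 + - gamma + 1) with 0 by ring. apply Rpower_O; auto. }
  pose proof (Rpower_pos v (gamma - 1)). pose proof (Rpower_pos v (- gamma)).
  pose proof (Rpower_pos v (1 + alpha)). pose proof (Rpower_pos v (- gamma - 1 - alpha)).
  set (A := Rpower v (- gamma - 1 - alpha)) in *.
  set (G := Rpower v (gamma + 1)) in *.
  set (M := Rpower v (- gamma)) in *.
  set (B := Rpower v (1 + alpha)) in *.
  set (P := Rpower v (gamma - 1)) in *.
  assert (Hcc : c * c = K * M * v).
  { rewrite <- E3. replace (c * c * P * M * v) with (c * c * (P * M * v)) by ring. rewrite EP; ring. }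
  rewrite Hcc in E2.
  replace (v * Du - K * M * v * Du / v) with (v * Du - K * M * Du) in E2 by (field; lra).
  rewrite Ey, EM in E2.
  assert (Z : B * (Du * (A * (G - K)) - beta) = 0) by (rewrite <- (Rminus_diag_eq _ _ E2); ring).
  apply Rmult_integral in Z. destruct Z as [Z|Z]; [lra|].
  replace (Du * (/ beta * (A * (G - K)))) with (/ beta * (Du * (A * (G - K)))) by ring.
  replace (Du * (A * (G - K))) with beta by lra. field; lra.
Qed.

Lemma weak_props c2 u2 : weak_sol alpha beta gamma cm um L c2 u2 ->
  forall x, 0 <= x <= L -> X (u2 x) = x /\ c2 x * c2 x * Rpower (u2 x) (gamma - 1) = K /\
    (um < s -> u2 x < s) /\ (s < um -> s < u2 x).
Proof.
  intros [C0 [U0 [Hpos [Lc0 [Lu0 [LcL [LuL Hode]]]]]]].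
  assert (Hd : forall x, 0 < x < L -> is_derive c2 x (Derive c2 x) /\ is_derive u2 x (Derive u2 x) /\
     Derive c2 x * u2 x + (gamma - 1) / 2 * c2 x * Derive u2 x = 0 /\
     u2 x * Derive u2 x + 2 / (gamma - 1) * c2 x * Derive c2 x = beta * Rpower (u2 x) (1 + alpha)).
  { intros x Hx. destruct (Hode x Hx) as [E1 [E2 [O1 O2]]].
    repeat split; auto; apply Derive_correct; auto. }
  set (Q := fun x => c2 x * c2 x * Rpower (u2 x) (gamma - 1)).
  assert (HQd : forall x, 0 < x < L -> is_derive Q x 0).
  { intros x Hx. destruct (Hd x Hx) as [Dc [Du [O1 O2]]].
    destruct (Hpos x ltac:(lra)) as [Pc Pu].
    eapply is_derive_eq.
    - apply dmult. apply dmult; eauto. apply (dcomp (fun y => Rpower y (gamma - 1)) u2).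
      apply is_derive_Rpow; auto. eauto.
    - assert (EP : Rpower (u2 x) (gamma - 1) = Rpower (u2 x) (gamma - 1 - 1) * u2 x).
      { rewrite <- (Rpower_1 (u2 x)) at 3 by auto. rewrite <- Rpower_plus. f_equal; ring. }
      cbv beta. rewrite EP.
      replace ((Derive c2 x * c2 x + c2 x * Derive c2 x) * (Rpower (u2 x) (gamma - 1 - 1) * u2 x) +
        c2 x * c2 x * (Derive u2 x * ((gamma - 1) * Rpower (u2 x) (gamma - 1 - 1))))
        with (2 * c2 x * Rpower (u2 x) (gamma - 1 - 1) * (Derive c2 x * u2 x + (gamma - 1) / 2 * c2 x * Derive u2 x))
        by (field; lra).
      rewrite O1; ring. }
  assert (HQ0 : filterlim Q (at_right 0) (locally K)).
  { replace K with (cm * cm * Rpower um (gamma - 1)) by (unfold Kc; ring).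
    apply (lim_mul _ (FR 0)).
    apply (lim_mul _ (FR 0)); auto.
    apply (lim_cont _ u2 (fun y => Rpower y (gamma - 1))); auto.
    apply Rpow_cont; auto. }
  assert (HQi : forall x, 0 < x < L -> Q x = K) by (apply const_from_deriv; auto).
  assert (HQL : Q L = K).
  { apply (lim_unique_l L Q).
    - apply (lim_mul _ (FL L)).
      apply (lim_mul _ (FL L)); auto.
      apply (lim_cont _ u2 (fun y => Rpower y (gamma - 1))); auto.
      apply Rpow_cont. apply Hpos; lra.
    - apply (lim_ext_l L (fun _ => K)). apply lim_const_l.
      apply (at_left_near 0 L); auto. intros y Hy; symmetry; apply HQi; auto. }
  assert (HQa : forall x, 0 <= x <= L -> Q x = K).
  { intros x Hx. destruct (Req_dec x 0) as [E|N].
    - subst x. unfold Q. rewrite C0, U0. unfold Kc; ring.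
    - destruct (Req_dec x L) as [E'|N']. subst; auto. apply HQi; lra. }
  set (Y := fun t => X (u2 t) + - t).
  assert (HYd : forall x, 0 < x < L -> is_derive Y x 0).
  { intros x Hx. destruct (Hd x Hx) as [Dc [Du [O1 O2]]].
    destruct (Hpos x ltac:(lra)) as [Pc Pu].
    eapply is_derive_eq.
    - apply dplus. apply (dcomp X u2). apply Xd; auto. eauto. apply dopp, is_derive_idR.
    - rewrite (alg2 (u2 x) (c2 x) (Derive c2 x)); auto. ring. apply (HQa x); lra. }
  assert (HY0 : filterlim Y (at_right 0) (locally 0)).
  { replace 0 with (X um + - 0) at 2 by (rewrite X_um; auto; ring).
    apply (lim_add _ (FR 0)).
    apply (lim_cont _ u2 X); auto. apply Xc; auto.
    apply (lim_opp _). apply lim_id_r. }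
  assert (HYi : forall x, 0 < x < L -> X (u2 x) = x).
  { intros x Hx. pose proof (const_from_deriv Y 0 L 0 HL HYd HY0 x Hx). unfold Y in H. lra. }
  assert (HYL : X (u2 L) = L).
  { apply (lim_unique_l L (fun t => X (u2 t))).
    - apply (lim_cont _ u2 X); auto. apply Xc, Hpos; lra.
    - apply (lim_ext_l L (fun t => t)). apply lim_id_l.
      apply (at_left_near 0 L); auto. intros y Hy; symmetry; apply HYi; auto. }
  assert (HYa : forall x, 0 <= x <= L -> X (u2 x) = x).
  { intros x Hx. destruct (Req_dec x 0) as [E|N].
    - subst x. rewrite U0. apply X_um; auto.
    - destruct (Req_dec x L) as [E'|N']. subst; auto. apply HYi; lra. }
  assert (Hne : forall x, 0 <= x <= L -> u2 x <> s).
  { intros x Hx E. pose proof (HYa x Hx). rewrite E in H. rewrite Lm_X in HLm. lra. }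
  assert (Hcont : forall x, 0 < x < L -> continuity_pt u2 x).
  { intros x Hx. destruct (Hode x Hx) as [E1 [[l E2] _]].
    apply derivable_continuous_pt. exists l. apply is_derive_Reals, E2. }
  intros x Hx. split; [apply HYa; auto|]. split; [apply (HQa x Hx)|]. split.
  - intros Hl. pose proof (keep_side (fun y => u2 y + - s) L HL) as KS.
    enough (u2 x + - s < 0) by lra. apply KS; auto.
    + intros y Hy. apply continuity_pt_plus. apply Hcont; auto. apply continuity_pt_const. intros ? ?; auto.
    + apply (lim_add _ (FR 0)). rewrite U0; auto. apply lim_const_r.
    + apply (lim_add _ (FL L)). auto. apply lim_const_l.
    + rewrite U0; lra.
    + intros y Hy. pose proof (Hne y Hy). lra.
  - intros Hl. pose proof (keep_side (fun y => s + - u2 y) L HL) as KS.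
    enough (s + - u2 x < 0) by lra. apply KS; auto.
    + intros y Hy. apply continuity_pt_plus. apply continuity_pt_const. intros ? ?; auto.
      apply continuity_pt_opp. apply Hcont; auto.
    + apply (lim_add _ (FR 0)). apply lim_const_r.
      apply (lim_opp _). rewrite U0; auto.
    + apply (lim_add _ (FL L)). apply lim_const_l.
      apply (lim_opp _). auto.
    + rewrite U0; lra.
    + intros y Hy. pose proof (Hne y Hy). lra.
Qed.
End UN.


Lemma inj_sub alpha beta gamma cm um v1 v2 : 1 < gamma -> 0 < cm -> 0 < um -> beta < 0 ->
  0 < v1 <= s_c gamma cm um -> 0 < v2 <= s_c gamma cm um ->
  Xf alpha beta gamma cm um v1 = Xf alpha beta gamma cm um v2 -> v1 = v2.
Proof.
  intros Hg Hc Hu Hb H1 H2 E. destruct (Rtotal_order v1 v2) as [L|[L|L]]; auto.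
  - pose proof (X_sub_incr alpha beta gamma cm um Hg Hc Hu Hb v1 v2); lra.
  - pose proof (X_sub_incr alpha beta gamma cm um Hg Hc Hu Hb v2 v1); lra.
Qed.

Lemma inj_sup alpha beta gamma cm um v1 v2 : 1 < gamma -> 0 < cm -> 0 < um -> beta < 0 ->
  s_c gamma cm um <= v1 -> s_c gamma cm um <= v2 ->
  Xf alpha beta gamma cm um v1 = Xf alpha beta gamma cm um v2 -> v1 = v2.
Proof.
  intros Hg Hc Hu Hb H1 H2 E. destruct (Rtotal_order v1 v2) as [L|[L|L]]; auto.
  - pose proof (X_sup_decr alpha beta gamma cm um Hg Hc Hu Hb v1 v2); lra.
  - pose proof (X_sup_decr alpha beta gamma cm um Hg Hc Hu Hb v2 v1); lra.
Qed.

Theorem lemma2p1 (gamma alpha beta cm um L : R) :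
  1 < gamma -> 0 < um -> 0 < cm -> 0 < L ->
  L < L_m alpha beta gamma cm um ->
  exists c u : R -> R,
    smooth_sol alpha beta gamma cm um L c u /\
    (forall c2 u2 : R -> R, weak_sol alpha beta gamma cm um L c2 u2 ->
       forall x, 0 <= x <= L -> c2 x = c x /\ u2 x = u x) /\
    (forall x, 0 < x <= L ->
       (0 < beta -> um < cm -> 0 < u x /\ u x < um /\ um < cm /\ cm < c x) /\
       (0 < beta -> cm < um -> 0 < c x /\ c x < cm /\ cm < um /\ um < u x) /\
       (beta < 0 -> um < cm -> 0 < um /\ um < u x /\ u x < c x /\ c x < cm) /\
       (beta < 0 -> cm < um -> 0 < cm /\ cm < c x /\ c x < u x /\ u x < um)).
Proof.
  intros Hg Hu Hc HL HLm.
  pose proof (s_pos gamma cm um) as Hsp.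
  destruct (classic (beta < 0 /\ s_c gamma cm um <> um)) as [[Hb Hs]|Hn];
    [|pose proof (Lm_nonpos alpha beta gamma cm um Hg Hc Hu Hn); lra].
  destruct (exist_u alpha beta gamma cm um L Hg Hc Hu Hb Hs HL HLm)
    as [u [lo [hi [p [q [Hlo [Hhi [Hp [Hpq [Hside [Hpum Hu']]]]]]]]]]].
  set (s := s_c gamma cm um) in *.
  set (X := Xf alpha beta gamma cm um) in *.
  set (c := fun x => Cc gamma cm um * Rpower (u x) (ee gamma)).
  assert (HX0 : X um = 0) by (apply X_um; auto).
  assert (HDnz : forall y, p < y < q -> Dd alpha gamma cm um y <> 0).
  { intros y Hy. destruct Hside as [Hq|Hq].
    - assert (0 < y < s_c gamma cm um) by (fold s; lra).
      pose proof (D_neg alpha gamma cm um y Hg Hc Hu H); lra.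
    - assert (s_c gamma cm um < y) by (fold s; lra).
      pose proof (D_pos alpha gamma cm um y Hg Hc Hu H); lra. }
  set (F := fun y => / (/ beta * (Rpower y (- alpha) + - Kc gamma cm um * Rpower y (- gamma - 1 - alpha)))).
  assert (HF : nice p q F).
  { unfold F. apply (n_inv p q (fun y => / beta * (Rpower y (- alpha) + - Kc gamma cm um * Rpower y (- gamma - 1 - alpha)))).
    - apply (n_mult p q (fun _ => / beta)). constructor.
      apply (n_plus p q (fun y => Rpower y (- alpha))). constructor.
      apply (n_mult p q (fun _ => - Kc gamma cm um)); constructor.
    - intros y Hy. pose proof (HDnz y Hy). unfold Dd in H.
      assert (/ beta <> 0) by (apply Rinv_neq_0_compat; lra).
      intro Z. apply Rmult_integral in Z. destruct Z as [Z|Z]; [tauto|]. apply H. lra. }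
  assert (HuF : forall x, lo < x < hi -> p < u x < q /\ is_derive u x (F (u x))).
  { intros x Hx. destruct (Hu' x Hx) as [H1 [H2 H3]]. split; auto.
    eapply is_derive_eq; [exact H3|]. unfold F, Dd. f_equal. f_equal. ring. }
  assert (Hinj : forall v1 v2, p <= v1 <= q -> p <= v2 <= q -> X v1 = X v2 -> v1 = v2).
  { intros v1 v2 H1 H2 E. destruct Hside as [Hq|Hq].
    - apply (inj_sub alpha beta gamma cm um); auto; try (fold s; lra); exact E.
    - apply (inj_sup alpha beta gamma cm um); auto; try (fold s; lra); exact E. }
  assert (Hu0 : u 0 = um).
  { assert (lo < 0 < hi) by lra. destruct (Hu' 0 H) as [H1 [H2 H3]]. apply Hinj; try lra. }
  exists c, u. split; [|split].
  -
    split; [unfold c; rewrite Hu0; apply (c_um alpha beta gamma cm um Hg Hc Hu)|]. split; [exact Hu0|].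
    intros x Hx. assert (Hx' : lo < x < hi) by lra.
    destruct (Hu' x Hx') as [H1 [H2 H3]].
    split; [apply (c_pos alpha beta gamma cm um Hg Hc Hu)|]. split; [lra|]. split.
    + intros n. split.
      * apply (comp_smooth_ex p q F lo hi u (Rlt_le _ _ Hp) HF HuF n (fun y => Cc gamma cm um * Rpower y (ee gamma))); auto.
        apply (n_mult p q (fun _ => Cc gamma cm um)); constructor.
      * apply (comp_smooth_ex p q F lo hi u (Rlt_le _ _ Hp) HF HuF n (fun y => y)); auto. constructor.
    + assert (Hcd : is_derive c x (/ (/ beta * Dd alpha gamma cm um (u x)) *
          (Cc gamma cm um * (ee gamma * Rpower (u x) (ee gamma - 1))))).
      { apply (dcomp (fun y => Cc gamma cm um * Rpower y (ee gamma)) u). apply dscal, is_derive_Rpow; lra. exact H3. }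
      unfold ode_at. rewrite (is_derive_unique _ _ _ Hcd), (is_derive_unique _ _ _ H3).
      destruct (ode_alg alpha beta gamma cm um Hg Hc Hu (u x) ltac:(lra) ltac:(lra) (HDnz (u x) H1)) as [O1 O2].
      unfold c. split; [exact O1|exact O2].
  -
    intros c2 u2 W x Hx.
    destruct (weak_props alpha beta gamma cm um L Hg Hc Hu Hb HL HLm c2 u2 W x Hx) as [W1 [W2 [W3 W4]]].
    destruct W as [_ [_ [Hpos _]]]. destruct (Hpos x Hx) as [Pc2 Pu2].
    assert (Hx' : lo < x < hi) by lra.
    destruct (Hu' x Hx') as [H1 [H2 H3]].
    assert (Eu : u2 x = u x).
    { unfold s, X in *. destruct (Rtotal_order um (s_c gamma cm um)) as [Hl|[Hl|Hl]]; [|congruence|].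
      - assert (q <= s_c gamma cm um) by (destruct Hside; auto; lra).
        specialize (W3 Hl).
        apply (inj_sub alpha beta gamma cm um); auto; try lra; try congruence.
      - assert (s_c gamma cm um <= p) by (destruct Hside; auto; lra).
        specialize (W4 Hl).
        apply (inj_sup alpha beta gamma cm um); auto; try lra; try congruence. }
    split; auto.
    rewrite Eu in W2. pose proof (c_sq alpha beta gamma cm um Hg Hc Hu (u x) ltac:(lra)) as CS.
    assert (E2 : Rpower (u x) (gamma - 1) * Rpower (u x) (1 - gamma) = 1).
    { rewrite <- Rpower_plus. replace (gamma - 1 + (1 - gamma)) with 0 by ring. apply Rpower_O; lra. }
    assert (Hsq : c2 x * c2 x = c x * c x).
    { unfold c. rewrite CS, <- W2.
      replace (c2 x * c2 x * Rpower (u x) (gamma - 1) * Rpower (u x) (1 - gamma))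
        with (c2 x * c2 x * (Rpower (u x) (gamma - 1) * Rpower (u x) (1 - gamma))) by ring.
      rewrite E2; ring. }
    assert (Pc : 0 < c x) by apply (c_pos alpha beta gamma cm um Hg Hc Hu).
    nra.
  -
    intros x Hx. assert (Hx' : lo < x < hi) by lra.
    destruct (Hu' x Hx') as [H1 [H2 H3]].
    destruct (um_s_cmp gamma cm um Hg Hc Hu) as [[A1 A2] [B1 B2]]. fold s in A1, A2, B1, B2.
    split; [intros; lra|]. split; [intros; lra|]. split.
    + intros _ Hl. assert (Hl' : um < s) by auto.
      assert (q <= s) by (destruct Hside; auto; lra).
      assert (Hux : um < u x).
      { destruct (Rtotal_order um (u x)) as [Hlt|[E|Hgt]]; auto.
        - rewrite <- E in H2. lra.
        - assert (Z1 : 0 < u x) by lra. assert (Z2 : um <= s_c gamma cm um) by (fold s; lra).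
          pose proof (X_sub_incr alpha beta gamma cm um Hg Hc Hu Hb (u x) um Z1 Hgt Z2) as XX.
          fold X in XX. lra. }
      assert (Z1 : 0 < u x) by lra. assert (Z3 : 0 < um < u x) by lra.
      destruct (cu_lt alpha beta gamma cm um Hg Hc Hu (u x) Z1) as [[_ C1] _].
      pose proof (c_decr alpha beta gamma cm um Hg Hc Hu um (u x) Z3) as CD. fold s in C1.
      rewrite (c_um alpha beta gamma cm um Hg Hc Hu) in CD.
      unfold c. repeat split; try lra.
    + intros _ Hl. assert (Hl' : s < um) by auto.
      assert (s <= p) by (destruct Hside; auto; lra).
      assert (Hux : u x < um).
      { destruct (Rtotal_order um (u x)) as [Hlt|[E|Hgt]]; auto.
        - assert (Z2 : s_c gamma cm um <= um) by (fold s; lra).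
          pose proof (X_sup_decr alpha beta gamma cm um Hg Hc Hu Hb um (u x) Z2 Hlt) as XX.
          fold X in XX. lra.
        - rewrite <- E in H2. lra. }
      assert (Z1 : 0 < u x) by lra. assert (Z3 : 0 < u x < um) by lra.
      destruct (cu_lt alpha beta gamma cm um Hg Hc Hu (u x) Z1) as [_ [_ C1]].
      pose proof (c_decr alpha beta gamma cm um Hg Hc Hu (u x) um Z3) as CD. fold s in C1.
      rewrite (c_um alpha beta gamma cm um Hg Hc Hu) in CD.
      unfold c. repeat split; try lra.
Qed.
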